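(* Let $S$ be a monoid. Every Rees artinian right $S$-act has only finitely many maximal (proper) subacts.
   Context: A right $S$-act is Rees artinian if its set of subacts satisfies the descending chain condition. A maximal subact is a proper subact not properly contained in any other proper subact. *)

(* Defs.v *)
From mathcomp Require Import all_boot.
From mathcomp Require Import boolp classical_sets cardinality.
Set Implicit Arguments. Unset Strict Implicit. Unset Printing Implicit Defensive.
Local Open Scope classical_set_scope.

Record monoid := Monoid {
  m_car :> Type;
  m_mul : m_car -> m_car -> m_car;
  m_one : m_car;
  m_mulA : forall x y z, m_mul x (m_mul y z) = m_mul (m_mul x y) z;
  m_mul1l : forall x, m_mul m_one x = x;
  m_mulr1 : forall x, m_mul x m_one = x }.

Record ract (S : monoid) := RAct {
  ra_car :> Type;
  ra_act : ra_car -> S -> ra_car;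
  ra_act1 : forall a, ra_act a (m_one S) = a;
  ra_actM : forall a s t, ra_act (ra_act a s) t = ra_act a (m_mul s t) }.

Definition subact (S : monoid) (A : ract S) (B : set A) : Prop :=
  forall b s, B b -> B (ra_act b s).

Definition rees_artinian (S : monoid) (A : ract S) : Prop :=
  forall B : nat -> set A,
    (forall n, subact (B n)) -> (forall n, B n.+1 `<=` B n) ->
    exists N, forall n, (N <= n)%N -> B n = B N.

Definition maximal_subact (S : monoid) (A : ract S) (M : set A) : Prop :=
  subact M /\ M `<` setT /\
  forall N : set A, subact N -> N `<` setT -> M `<=` N -> N = M.

(* Main.v *)
Require Import Defs.
From mathcomp Require Import all_boot.
From mathcomp Require Import boolp classical_sets cardinality.
From mathcomp Require Import functions.
Local Open Scope classical_set_scope.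

Lemma max_union (S : monoid) (A : ract S) (M M' : set A) :
  maximal_subact M -> maximal_subact M' -> M <> M' -> forall x, M x \/ M' x.
Proof.
move=> [sM [pM mM]] [sM' [pM' mM']] neq x.
apply: contrapT => /not_orP [nM nM'].
have sN : subact (M `|` M').
  by move=> b s [Hb|Hb]; [left; apply: sM | right; apply: sM'].
have pN : M `|` M' `<` setT.
  split => //; move=> /(_ x I) [] //.
have := mM _ sN pN (fun y Hy => or_introl Hy) => eN.
have sub : M' `<=` M by move=> y Hy; rewrite -eN; right.
by apply: neq; apply: mM' => //.
Qed.

Theorem mainTheorem9 (S : monoid) (A : ract S) :
  rees_artinian A -> finite_set [set M : set A | maximal_subact M].
Proof.
move=> RA; apply: contrapT => /infiniteP /pcard_leP [f].
pose g : nat -> set A := functions.InjFun.sort f.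
have gmax : forall n, maximal_subact (g n).
  by move=> n; have := ('funS_f (I : [set: nat] n)); rewrite /g /=.
have ginj : forall m n, g m = g n -> m = n.
  move=> m n H; have := ('inj_f (in_setT m) (in_setT n) H); rewrite /g; done.
pose B := fix B n := if n is n'.+1 then B n' `&` g n else g 0.
have sB : forall n, subact (B n).
  elim=> [|n IH] /=; first by case: (gmax 0).
  move=> b s [H1 H2]; split; first exact: IH.
  by case: (gmax n.+1) => sg _; apply: sg.
have dB : forall n, B n.+1 `<=` B n by move=> n x [].
have [N HN] := RA B sB dB.
have e := HN N.+1 (leqnSn N).
have BM : B N `<=` g N.+1 by rewrite -e => x [].
have [_ [[_ pM] _]] := gmax N.+1.
apply: pM => x _.
have claim : forall n, (n <= N)%N -> B n x \/ g N.+1 x.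
  elim=> [|n IH] Hn.
    have := @max_union _ _ _ _ (gmax 0) (gmax N.+1); apply; first by move=> H; have := ginj _ _ H.
  have Hn' : (n <= N)%N by apply: ltnW.
  have [Hb|Hb] := IH Hn'; last by right.
  have [Hg|Hg] : g n.+1 x \/ g N.+1 x.
    apply: (@max_union _ _ _ _ (gmax n.+1) (gmax N.+1)) => H; have := ginj _ _ H => E.
    by move: Hn; rewrite E ltnn.
  - by left; split.
  - by right.
by have [H|H] := claim N (leqnn N); [apply: BM|].
Qed.
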